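(* Let $\alpha:[r]\to[m]$ be increasing and $L\in L_m(T_L(\alpha))$. If there exist $n$ and an injective $\beta:[r]\to[n]$ such that $L\,\Pi(\alpha,\beta)=\Pi(\alpha,\beta)$, then $L=I_m$.
   Context: $\mathbb{F}$ is the field with two elements, $[n]=\{1,\dots,n\}$, $e_{n,i}$ standard basis column vectors, $I_m$ identity. For transitive $T\subseteq\{(i,j):i,j\in[m],i>j\}$, $L_m(T)=I_m+\mathrm{span}_{\mathbb{F}}\{e_{m,i}e_{m,j}^{\top}:(i,j)\in T\}$. $T_L(\alpha)=\{(i,j):j\in\mathrm{Im}(\alpha),\ i\in[m],\ i>j\}$. $\Pi(\alpha,\beta)=\sum_{i=1}^re_{m,\alpha(i)}e_{n,\beta(i)}^{\top}$. *)

(* Defs.v *)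
From HB Require Import structures.
From mathcomp Require Import all_boot all_order all_algebra.
Set Implicit Arguments. Unset Strict Implicit. Unset Printing Implicit Defensive.
Import GRing.Theory.
Local Open Scope ring_scope.

(* F = 'F_2, the field with two elements.  Indices [m] = {1..m} are
   represented 0-based by 'I_m; e_{m,i} e_{n,j}^T is delta_mx i j. *)

Definition TL (m r : nat) (alpha : 'I_r -> 'I_m) : rel 'I_m :=
  fun i j => (j \in codom alpha) && (j < i)%N.

Definition lower_transitive (m : nat) (T : rel 'I_m) : Prop :=
  (forall i j, T i j -> (j < i)%N) /\ transitive T.

Definition Lm (m : nat) (T : rel 'I_m) : 'M['F_2]_m -> Prop :=
  fun L => exists c : 'I_m -> 'I_m -> 'F_2,
    L = 1%:M + \sum_(i < m) \sum_(j < m | T i j) c i j *: delta_mx i j.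

Definition Pi (m n r : nat) (alpha : 'I_r -> 'I_m) (beta : 'I_r -> 'I_n)
  : 'M['F_2]_(m, n) :=
  \sum_(i < r) delta_mx (alpha i) (beta i).

Definition strictly_increasing (m r : nat) (alpha : 'I_r -> 'I_m) : Prop :=
  forall i j : 'I_r, (i < j)%N -> (alpha i < alpha j)%N.

(* Main.v *)
Require Import Defs.
From HB Require Import structures.
From mathcomp Require Import all_boot all_order all_algebra.
Import GRing.Theory.
Local Open Scope ring_scope.

Theorem lemma6 (m r : nat) (alpha : 'I_r -> 'I_m) (L : 'M['F_2]_m) :
  strictly_increasing alpha ->
  Lm (TL alpha) L ->
  (exists (n : nat) (beta : 'I_r -> 'I_n),
      injective beta /\ L *m Pi alpha beta = Pi alpha beta) ->
  L = 1%:M.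
Proof.
move=> _ [c HL] [n [beta [binj H]]].
have Pik : forall l k, Pi alpha beta l (beta k) = (alpha k == l)%:R.
  move=> l k; rewrite /Pi summxE (bigD1 k) //= big1 ?addr0.
    by rewrite mxE eqxx andbT eq_sym.
  move=> k' nk; rewrite mxE.
  have -> : (beta k == beta k') = false by apply/negbTE; apply: contra nk => /eqP/binj ->.
  by rewrite andbF.
have LE : forall i j, L i j = (i == j)%:R + (TL alpha i j)%:R * c i j.
  move=> i j.
  have E : (\sum_(i0 < m) \sum_(j0 < m | TL alpha i0 j0) c i0 j0 *: delta_mx i0 j0) i j
     = \sum_(i0 < m) \sum_(j0 < m | TL alpha i0 j0) c i0 j0 * ((i == i0) && (j == j0))%:R.
    rewrite summxE; apply: eq_bigr => i0 _; rewrite summxE; apply: eq_bigr => j0 _.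
    by rewrite !mxE.
  rewrite HL mxE E mxE (bigD1 i) //= [X in _ + (_ + X)]big1 => [|i' ni]; last first.
    by rewrite big1 // => j0 _; rewrite eq_sym (negbTE ni) mulr0.
  rewrite addr0 eqxx /=; congr (_ + _).
  case T: (TL alpha i j).
    rewrite (bigD1 j) //= big1 => [|j' /andP[_ nj]].
      by rewrite eqxx addr0 mulr1 mul1r.
    by rewrite eq_sym (negbTE nj) mulr0.
  rewrite big1 ?mul0r // => j' Tj'.
  case: eqP => [ej|]; last by rewrite mulr0.
  by rewrite -ej T in Tj'.
apply/matrixP => i j.
case: (boolP (j \in codom alpha)) => [/codomP [k ->]|nj].
  have := congr1 (fun M : 'M_(m, n) => M i (beta k)) H; rewrite /= Pik => HH.
  rewrite mxE eq_sym -HH mxE (bigD1 (alpha k)) //= big1 ?Pik ?eqxx ?mulr1 ?addr0 //.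
  by move=> l nl; rewrite Pik eq_sym (negbTE nl) mulr0.
by rewrite LE mxE /TL (negbTE nj) /= mul0r addr0.
Qed.
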